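(* Let $G_m$ be a parametric regulatory network and $\pi$ a finite sequence of transitions in $\Delta(G_m)$, with $\tilde\pi$ the set of its transitions. Then $p^\#(\tilde\pi)\neq\varnothing$ if and only if $p(\tilde\pi)\neq\emptyset$.
   Context: An influence graph is $G=(V,I)$ with $V=\{1,\dots,n\}$, $I\subseteq V\times V$; regulators $n^-(v)=\{u\mid(u,v)\in I\}$. $m\in\mathbb N^n$, $D_v=\{0,\dots,m_v\}$, $G_m=(G,m)$. Regulator states $\Omega_v=\prod_{u\in n^-(v)}D_u$. Parametrisations: $P\in\mathbb P(G_m)=\prod_{\langle v,\omega\rangle,\ \omega\in\Omega_v}D_v$ with coordinates $P_{v,\omega}$, ordered componentwise; $\bot$ is the zero vector, $\top_{v,\omega}=m_v$. A pair $(L,U)$ denotes $\{P\mid L\le P\le U\}$, the empty lattice $\varnothing$ when $L\not\le U$. States $S(G_m)=\prod_vD_v$; $\omega_v(x)$ projects $x$ onto the regulators of $v$. Transitions: $x\xrightarrow{v,+}y$ ($y$ equals $x$ except $y_v=x_v+1\le m_v$), $x\xrightarrow{v,-}y$ ($y_v=x_v-1\ge0$). $\mathcal P_{x\xrightarrow{v,+}y}=\{P\mid P_{v,\omega_v(x)}\ge x_v+1\}$, $\mathcal P_{x\xrightarrow{v,-}y}=\{P\mid P_{v,\omega_v(x)}\le x_v-1\}$; $p(\emptyset)=\mathbb P(G_m)$, $p(T)=\bigcap_{t\in T}\mathcal P_t$. $\nabla_{x\xrightarrow{v,+}y}(L,U)=(\max(L,\bot[(v,\omega_v(x))\leftarrow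 x_v+1]),U)$, $\nabla_{x\xrightarrow{v,-}y}(L,U)=(L,\min(U,\top[(v,\omega_v(x))\leftarrow x_v-1]))$; $p^\#(\emptyset)=(\bot,\top)$, $p^\#(T\cup\{t\})=\nabla_t(p^\#(T))$. *)

(* Defs.v *)
From mathcomp Require Import all_boot.
Set Implicit Arguments. Unset Strict Implicit. Unset Printing Implicit Defensive.

(* A parametric regulatory network G_m is given by
   n : nat            (V = 'I_n, i.e. {1..n} shifted to {0..n-1}),
   I : rel 'I_n       (I u v  <=>  (u,v) is an edge, i.e. u is a regulator of v),
   m : 'I_n -> nat    (D_v = {0..m v}). *)

Definition state (n : nat) := {ffun 'I_n -> nat}.
Definition is_state n (m : 'I_n -> nat) (x : state n) : Prop :=
  forall v, x v <= m v.

(* Regulator states Omega_v = prod_{u in n^-(v)} D_u, encoded as functions on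
   'I_n that are 0 outside the regulators n^-(v). *)
Definition is_regstate n (I : rel 'I_n) (m : 'I_n -> nat) (v : 'I_n)
  (w : {ffun 'I_n -> nat}) : Prop :=
  forall u, (I u v -> w u <= m u) /\ (~~ I u v -> w u = 0).

Definition omega n (I : rel 'I_n) (v : 'I_n) (x : state n) : {ffun 'I_n -> nat} :=
  [ffun u => if I u v then x u else 0].

(* Parametrisations: P v w is the coordinate P_{v,w}; only the coordinates with
   w a regulator state of v are meaningful. *)
Definition param (n : nat) := 'I_n -> {ffun 'I_n -> nat} -> nat.

Definition is_param n (I : rel 'I_n) (m : 'I_n -> nat) (P : param n) : Prop :=
  forall v w, is_regstate I m v w -> P v w <= m v.

Definition param_le n (I : rel 'I_n) (m : 'I_n -> nat) (P Q : param n) : Prop :=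
  forall v w, is_regstate I m v w -> P v w <= Q v w.

Definition pbot n : param n := fun _ _ => 0.
Definition ptop n (m : 'I_n -> nat) : param n := fun v _ => m v.

Definition pupd n (B : param n) (v : 'I_n) (w : {ffun 'I_n -> nat}) (k : nat)
  : param n :=
  fun v' w' => if (v' == v) && (w' == w) then k else B v' w'.

Definition pmax n (P Q : param n) : param n := fun v w => maxn (P v w) (Q v w).
Definition pmin n (P Q : param n) : param n := fun v w => minn (P v w) (Q v w).

(* A transition x --(v,s)--> y, with s = true for '+' and s = false for '-'. *)
Definition trans (n : nat) := (state n * 'I_n * bool * state n)%type.
Definition tsrc n (t : trans n) : state n := t.1.1.1.
Definition tvar n (t : trans n) : 'I_n := t.1.1.2.
Definition tsign n (t : trans n) : bool := t.1.2.
Definition ttgt n (t : trans n) : state n := t.2.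

Definition is_transition n (m : 'I_n -> nat) (t : trans n) : Prop :=
  let x := tsrc t in let v := tvar t in let y := ttgt t in
  is_state m x /\ is_state m y /\ (forall u, u != v -> y u = x u) /\
  (if tsign t then y v = (x v).+1 else x v = (y v).+1).

Definition param_in_trans n (I : rel 'I_n) (t : trans n) (P : param n) : Prop :=
  let x := tsrc t in let v := tvar t in
  if tsign t then (x v).+1 <= P v (omega I v x)
  else P v (omega I v x) <= (x v).-1.

Definition p_set n (I : rel 'I_n) (m : 'I_n -> nat) (T : seq (trans n))
  (P : param n) : Prop :=
  is_param I m P /\ forall t, t \in T -> param_in_trans I t P.

Definition nabla n (I : rel 'I_n) (m : 'I_n -> nat) (t : trans n)
  (LU : param n * param n) : param n * param n :=
  let x := tsrc t in let v := tvar t in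
  if tsign t then
    (pmax LU.1 (pupd (@pbot n) v (omega I v x) (x v).+1), LU.2)
  else
    (LU.1, pmin LU.2 (pupd (ptop m) v (omega I v x) (x v).-1)).

Definition psharp n (I : rel 'I_n) (m : 'I_n -> nat) (T : seq (trans n))
  : param n * param n :=
  foldl (fun LU t => nabla I m t LU) (@pbot n, ptop m) T.

Definition lattice_nonempty n (I : rel 'I_n) (m : 'I_n -> nat)
  (LU : param n * param n) : Prop := param_le I m LU.1 LU.2.

(* Main.v *)
Require Import Defs.
From mathcomp Require Import all_boot.

Section S.
Variables (n : nat) (I : rel 'I_n) (m : 'I_n -> nat).

Lemma fold_mono (s : seq (trans n)) LU v w :
  LU.1 v w <= (foldl (fun LU t => nabla I m t LU) LU s).1 v w /\
  (foldl (fun LU t => nabla I m t LU) LU s).2 v w <= LU.2 v w.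
Proof.
elim: s LU => [|t s IH] LU /=; first by [].
have [H1 H2] := IH (nabla I m t LU).
rewrite /nabla in H1 H2 *; case: (tsign t) H1 H2 => /= H1 H2; split.
- by apply: leq_trans H1; rewrite /pmax leq_maxl.
- exact: H2.
- exact: H1.
- by apply: leq_trans H2 _; rewrite /pmin geq_minl.
Qed.

Lemma fold_sat (s : seq (trans n)) LU t : t \in s ->
  let F := foldl (fun LU t => nabla I m t LU) LU s in
  let x := tsrc t in let v := tvar t in
  if tsign t then (x v).+1 <= F.1 v (omega I v x)
  else F.2 v (omega I v x) <= (x v).-1.
Proof.
elim: s LU => [|t' s IH] LU //=; rewrite inE => /orP [/eqP ->|Hin]; last exact: IH.
have [H1 H2] := fold_mono s (nabla I m t' LU) (tvar t') (omega I (tvar t') (tsrc t')).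
rewrite /nabla in H1 H2 *; case: (tsign t') H1 H2 => /= H1 H2.
- apply: leq_trans H1; rewrite /pmax /pupd !eqxx /=; exact: leq_maxr.
- apply: leq_trans H2 _; rewrite /pmin /pupd !eqxx /=; exact: geq_minr.
Qed.

Lemma fold_bound (s : seq (trans n)) LU :
  (forall t, t \in s -> is_transition m t) ->
  (forall v w, is_regstate I m v w -> LU.1 v w <= m v) ->
  forall v w, is_regstate I m v w ->
  (foldl (fun LU t => nabla I m t LU) LU s).1 v w <= m v.
Proof.
elim: s LU => [|t s IH] LU //= Ht HLU; apply: IH.
  by move=> t' H; apply: Ht; rewrite inE H orbT.
move=> v w Hr; rewrite /nabla.
have [_ [Hy [_ Hs]]] := Ht t (mem_head _ _).
case: (tsign t) Hs => Hs /=; last exact: HLU.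
rewrite /pmax geq_max HLU //= /pupd.
case: ifP => // /andP [/eqP -> _]; rewrite -Hs; exact: Hy.
Qed.

Lemma fold_between (s : seq (trans n)) LU P :
  is_param I m P ->
  (forall t, t \in s -> param_in_trans I t P) ->
  (forall v w, is_regstate I m v w -> LU.1 v w <= P v w /\ P v w <= LU.2 v w) ->
  forall v w, is_regstate I m v w ->
  let F := foldl (fun LU t => nabla I m t LU) LU s in
  F.1 v w <= P v w /\ P v w <= F.2 v w.
Proof.
move=> HP; elim: s LU => [|t s IH] LU //= Ht HLU; apply: IH.
  by move=> t' H; apply: Ht; rewrite inE H orbT.
move=> v w Hr; have := Ht t (mem_head _ _); rewrite /param_in_trans /nabla.
have [A B] := HLU v w Hr.
case: (tsign t) => Hp /=; split => //.
- rewrite /pmax geq_max A /pupd /=; case: ifP => // /andP [/eqP E1 /eqP E2]; rewrite E1 E2; exact: Hp.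
- rewrite /pmin leq_min B /pupd /=; case: ifP => [/andP [/eqP E1 /eqP E2]|_]; last exact: HP; rewrite E1 E2; exact: Hp.
Qed.

End S.

Theorem corollary1 (n : nat) (I : rel 'I_n) (m : 'I_n -> nat)
  (pi : seq (trans n)) :
  (forall t, t \in pi -> is_transition m t) ->
  (lattice_nonempty I m (psharp I m pi) <-> exists P : param n, p_set I m pi P).
Proof.
move=> Ht; split.
- move=> Hne; exists (psharp I m pi).1; split.
    by apply: fold_bound => //.
  move=> t Hin; have := @fold_sat n I m pi (@pbot n, ptop m) t Hin.
  rewrite /param_in_trans /psharp; case: (tsign t) => // H.
  apply: leq_trans H; apply: Hne.
  have [Hx _] := Ht t Hin.
  move=> u; rewrite /omega ffunE; split; first by move=> -> ; exact: Hx.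
  by move=> /negbTE ->.
- move=> [P [HP Hs]] v w Hr.
  have [A B] := @fold_between n I m pi (@pbot n, ptop m) P HP Hs (fun v w Hr => conj (leq0n _) (HP v w Hr)) v w Hr.
  exact: leq_trans A B.
Qed.
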